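(* Let $\beta>2$, $r_{\mathrm e}\ge0$, $\theta_{\mathrm e}\in[0,2\pi)$, and let $F_\beta(\mathbf{x},r)$, $p_\beta,q_\beta$, $\mathbf{m}_i^\beta$, $\boldsymbol{\sigma}_i^\beta$ be as in the context. Let $\epsilon>0$ and let $\mathbf{m}_i^\beta(\cdot),\boldsymbol{\sigma}_i^\beta(\cdot):[0,\epsilon)\to\mathbb{R}^2$, $0\le i\le 2$, be smooth maps with $\mathbf{m}_i^\beta(0)=\mathbf{m}_i^\beta$, $\boldsymbol{\sigma}_i^\beta(0)=\boldsymbol{\sigma}_i^\beta$, such that $\mathbf{m}_i^\beta(r)$ and $\boldsymbol{\sigma}_i^\beta(r)$ are critical points of $F_\beta(\cdot,r)$ for every $r\in[0,\epsilon)$ (such maps exist by the implicit function theorem). Let $\phi_i^\beta(r)=F_\beta(\mathbf{m}_i^\beta(r),r)$ and $\psi_i^\beta(r)=F_\beta(\boldsymbol{\sigma}_i^\beta(r),r)$. Then for $0\le i\le2$, $$\frac{d\phi_i^\beta}{dr}(0)=(3p_\beta-1)\cos\Big(\theta_{\mathrm e}-\frac{2\pi i}{3}\Big),\qquad \frac{d\psi_i^\beta}{dr}(0)=(3q_\beta-1)\cos\Big(\theta_{\mathrm e}-\frac{2\pi i}{3}\Big).$$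
   Context: $\Xi=\{(x_1,x_2): x_1,x_2\ge0,\ x_1+x_2\le1\}$, $x_0=1-x_1-x_2$, $\mathbf{v}_k=(\cos(2\pi k/3),\sin(2\pi k/3))$, and $$F_\beta(\mathbf{x},r)=-\frac12\Big|\sum_{k=0}^2x_k\mathbf{v}_k\Big|^2+\frac1\beta\sum_{k=0}^2x_k\log(3x_k)-r\sum_{i=0}^2x_i\cos\Big(\theta_{\mathrm e}-\frac{2\pi i}{3}\Big),$$ the potential of the mean-field Potts model with external field of magnitude $r$ and angle $\theta_{\mathrm e}$. Let $f_0(t)=\frac{2}{3(1-3t)}\log\frac{1-2t}{t}$ on $(0,1/2)\setminus\{1/3\}$, $f_0(1/3)=2$; for $\beta>2$ the equation $f_0(t)=\beta$ has exactly two solutions $p_\beta<q_\beta$ in $(0,1/2)$, with $p_\beta<1/3<q_\beta$. Set $\mathbf{m}_0^\beta=(p_\beta,p_\beta)$, $\mathbf{m}_1^\beta=(1-2p_\beta,p_\beta)$, $\mathbf{m}_2^\beta=(p_\beta,1-2p_\beta)$, $\boldsymbol{\sigma}_0^\beta=(q_\beta,q_\beta)$, $\boldsymbol{\sigma}_1^\beta=(1-2q_\beta,q_\beta)$, $\boldsymbol{\sigma}_2^\beta=(q_\beta,1-2q_\beta)$; these are nondegenerate critical points of $F_\beta(\cdot,0)$. *)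

(* Defs.v *)
From Stdlib Require Import Reals.
From Coquelicot Require Import Coquelicot.
Open Scope R_scope.

Definition ang (k : nat) : R := 2 * PI * INR k / 3.

(* barycentric coordinate x_k of x = (x1,x2), with x0 = 1 - x1 - x2 *)
Definition xk (x : R * R) (k : nat) : R :=
  match k with
  | O => 1 - fst x - snd x
  | S O => fst x
  | _ => snd x
  end.

(* F_beta(x, r) for external field of angle theta (magnitude r);
   the convention 0 * log 0 = 0 is Stdlib's (ln 0 = 0). *)
Definition Fb (beta theta : R) (x : R * R) (r : R) : R :=
  - (1/2) * ( (xk x 0 * cos (ang 0) + xk x 1 * cos (ang 1) + xk x 2 * cos (ang 2)) ^ 2
            + (xk x 0 * sin (ang 0) + xk x 1 * sin (ang 1) + xk x 2 * sin (ang 2)) ^ 2 )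
  + / beta * ( xk x 0 * ln (3 * xk x 0) + xk x 1 * ln (3 * xk x 1)
             + xk x 2 * ln (3 * xk x 2) )
  - r * ( xk x 0 * cos (theta - ang 0) + xk x 1 * cos (theta - ang 1)
        + xk x 2 * cos (theta - ang 2) ).

Definition f0 (t : R) : R :=
  if Req_EM_T t (1/3) then 2 else 2 / (3 * (1 - 3 * t)) * ln ((1 - 2 * t) / t).

Definition in_int_Xi (x : R * R) : Prop :=
  0 < fst x /\ 0 < snd x /\ fst x + snd x < 1.

(* x is a critical point of F_beta(., r): both partial derivatives vanish.
   (F is differentiable only in the interior of Xi.) *)
Definition critical (beta theta : R) (x : R * R) (r : R) : Prop :=
  in_int_Xi x /\
  is_derive (fun t => Fb beta theta (t, snd x) r) (fst x) 0 /\
  is_derive (fun t => Fb beta theta (fst x, t) r) (snd x) 0.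

(* the critical points m_i^beta and sigma_i^beta (for t = p_beta resp. q_beta) *)
Definition cpt (t : R) (i : nat) : R * R :=
  match i with
  | O => (t, t)
  | S O => (1 - 2 * t, t)
  | _ => (t, 1 - 2 * t)
  end.

Definition is_deriv_within (D : R -> Prop) (f : R -> R) (x d : R) : Prop :=
  filterlim (fun s => (f s - f x) / (s - x)) (within D (locally' x)) (locally d).

Definition smooth_on (D : R -> Prop) (f : R -> R) : Prop :=
  exists Dn : nat -> R -> R,
    (forall x, D x -> Dn O x = f x) /\
    (forall n x, D x -> is_deriv_within D (Dn n) x (Dn (S n) x)).

Definition Ico0 (eps : R) : R -> Prop := fun r => 0 <= r < eps.

(* Main.v *)
Require Import Defs.
From Stdlib Require Import Reals Lra Lia.
From Coquelicot Require Import Coquelicot.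
Open Scope R_scope.

Lemma comp_deriv beta theta (u1 u2 : R -> R) d1 d2 :
  beta <> 0 -> is_derive u1 0 d1 -> is_derive u2 0 d2 ->
  critical beta theta (u1 0, u2 0) 0 ->
  is_derive (fun s => Fb beta theta (u1 s, u2 s) s) 0
   (- (xk (u1 0, u2 0) 0 * cos (theta - ang 0) + xk (u1 0, u2 0) 1 * cos (theta - ang 1)
      + xk (u1 0, u2 0) 2 * cos (theta - ang 2))).
Proof.
intros Hbeta Hd1 Hd2 [[Ha [Hb Hab]] [Hc1 Hc2]]; simpl in *.
evar (L1 : R).
assert (HL1 : is_derive (fun t => Fb beta theta (t, u2 0) 0) (u1 0) L1).
{ unfold Fb, xk; simpl. auto_derive; [repeat split; lra | unfold L1; reflexivity]. }
evar (L2 : R).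
assert (HL2 : is_derive (fun t => Fb beta theta (u1 0, t) 0) (u2 0) L2).
{ unfold Fb, xk; simpl. auto_derive; [repeat split; lra | unfold L2; reflexivity]. }
assert (E1 : L1 = 0).
{ rewrite <- (is_derive_unique _ _ _ HL1). exact (is_derive_unique _ _ _ Hc1). }
assert (E2 : L2 = 0).
{ rewrite <- (is_derive_unique _ _ _ HL2). exact (is_derive_unique _ _ _ Hc2). }
evar (L : R).
assert (HL : is_derive (fun s => Fb beta theta (u1 s, u2 s) s) 0 L).
{ unfold Fb, xk; simpl. auto_derive.
  - repeat split; try (eexists; eassumption); lra.
  - unfold L; reflexivity. }
eapply is_derive_ext; [intro; reflexivity|].
replace (- _) with L; [exact HL|].
unfold L1 in E1; unfold L2 in E2; unfold L; simpl.
replace (Derive (fun x => u1 x) 0) with d1 by (symmetry; apply is_derive_unique; exact Hd1).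
replace (Derive (fun x => u2 x) 0) with d2 by (symmetry; apply is_derive_unique; exact Hd2).
replace (1 - u1 0 + - u2 0) with (1 + - u1 0 + - u2 0) in E2 by ring.
match goal with
 | HE1 : ?e1 = 0, HE2 : ?e2 = 0 |- _ = ?rhs =>
   rename HE1 into H1; rename HE2 into H2; transitivity (d1 * e1 + d2 * e2 + rhs)
end.
field. repeat split; lra.
rewrite H1, H2; ring.
Qed.

Lemma ball_R (x e y : R) : ball x e y <-> Rabs (y - x) < e.
Proof. reflexivity. Qed.

Lemma reflect_deriv eps (u : R -> R) d : 0 < eps ->
  is_deriv_within (Ico0 eps) u 0 d ->
  is_derive (fun s => if Rle_dec 0 s then u s else 2 * u 0 - u (-s)) 0 d.
Proof.
intros Heps H. apply is_derive_Reals. intros e He.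
assert (Hl : locally d (fun y => Rabs (y - d) < e)).
{ exists (mkposreal e He). intros y Hy. apply ball_R in Hy. exact Hy. }
specialize (H _ Hl). unfold filtermap, within, locally' in H.
destruct H as [del Hdel].
assert (Hm : 0 < Rmin del eps) by (apply Rmin_pos; [apply cond_pos| lra]).
exists (mkposreal _ Hm). intros h hne hlt. simpl in hlt.
assert (hd : Rabs h < del) by (eapply Rlt_le_trans; [exact hlt| apply Rmin_l]).
assert (he : Rabs h < eps) by (eapply Rlt_le_trans; [exact hlt| apply Rmin_r]).
destruct (Rle_dec 0 0) as [_|n]; [|lra].
replace (0 + h) with h by ring.
destruct (Rle_dec 0 h) as [hp|hn].
- assert (hq := Hdel h). rewrite ball_R in hq.
  replace (h - 0) with h in hq by ring.
  apply hq; auto. unfold Ico0. split; [lra|]. rewrite Rabs_right in he; lra.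
- assert (hq := Hdel (-h)). rewrite ball_R in hq.
  replace (- h - 0) with (-h) in hq by ring. rewrite Rabs_Ropp in hq.
  assert (Hx : Rabs ((u (- h) - u 0) / (- h) - d) < e).
  { apply hq; auto. lra. unfold Ico0. rewrite Rabs_left in he; lra. }
  replace ((2 * u 0 - u (- h) - u 0) / h) with ((u (- h) - u 0) / (- h)); [exact Hx|].
  field. lra.
Qed.

Lemma back eps (g f : R -> R) L : is_derive g 0 L ->
  (forall s, 0 <= s -> g s = f s) -> is_deriv_within (Ico0 eps) f 0 L.
Proof.
intros H Hgf P [e He]. apply is_derive_Reals in H.
destruct (H e (cond_pos e)) as [del Hdel].
unfold filtermap, within, locally'. exists del.
intros y Hy yne Dy. apply He. apply ball_R. apply ball_R in Hy.
destruct Dy as [Dy1 Dy2].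
rewrite <- (Hgf y Dy1), <- (Hgf 0 (Rle_refl 0)).
rewrite Rminus_0_r in *.
assert (Hy2 : Rabs y < del) by (pose proof (proj1 (ball_R 0 del y) Hy) as Hz; rewrite Rminus_0_r in Hz; exact Hz). assert (Hq := Hdel y yne Hy2). rewrite Rplus_0_l in Hq. exact Hq.
Qed.

Lemma smooth_d eps f : smooth_on (Ico0 eps) f -> 0 < eps ->
  exists d, is_deriv_within (Ico0 eps) f 0 d.
Proof.
intros [Dn [H0 H1]] He.
assert (D0 : Ico0 eps 0) by (unfold Ico0; lra).
exists (Dn 1%nat 0). intros P HP. specialize (H1 O 0 D0 P HP).
unfold filtermap, within, locally' in *.
eapply filter_imp; [|exact H1]. simpl.
intros y Hy Dy. rewrite <- (H0 y Dy), <- (H0 0 D0). apply Hy; auto.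
Qed.
Lemma S0 theta : cos (theta - ang 0) + cos (theta - ang 1) + cos (theta - ang 2) = 0.
Proof.
unfold ang. simpl INR.
replace (2 * PI * 0 / 3) with 0 by field.
replace (2 * PI * 1 / 3) with (PI - PI/3) by field.
replace (2 * PI * (1 + 1) / 3) with (PI/3 + PI) by field.
rewrite (cos_minus theta 0), (cos_minus theta (PI - PI/3)), (cos_minus theta (PI/3 + PI)), Rtrigo_facts.cos_pi_minus, sin_PI_x, neg_cos, neg_sin, cos_0, sin_0, cos_PI3.
lra.
Qed.

Lemma key beta theta eps (m : R -> R * R) d1 d2 : 0 < eps -> beta <> 0 ->
  is_deriv_within (Ico0 eps) (fun r => fst (m r)) 0 d1 ->
  is_deriv_within (Ico0 eps) (fun r => snd (m r)) 0 d2 ->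
  critical beta theta (m 0) 0 ->
  is_deriv_within (Ico0 eps) (fun r => Fb beta theta (m r) r) 0
   (- (xk (m 0) 0 * cos (theta - ang 0) + xk (m 0) 1 * cos (theta - ang 1)
      + xk (m 0) 2 * cos (theta - ang 2))).
Proof.
intros He Hb H1 H2 Hc.
pose proof (reflect_deriv eps _ _ He H1) as R1.
pose proof (reflect_deriv eps _ _ He H2) as R2.
assert (E : (fun s => if Rle_dec 0 s then fst (m s) else 2 * fst (m 0) - fst (m (- s))) 0 = fst (m 0)
         /\ (fun s => if Rle_dec 0 s then snd (m s) else 2 * snd (m 0) - snd (m (- s))) 0 = snd (m 0)).
{ simpl. destruct (Rle_dec 0 0); [split; reflexivity | lra]. }
destruct E as [E1 E2].
assert (Hc' : critical beta theta
   ((fun s => if Rle_dec 0 s then fst (m s) else 2 * fst (m 0) - fst (m (- s))) 0,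
    (fun s => if Rle_dec 0 s then snd (m s) else 2 * snd (m 0) - snd (m (- s))) 0) 0).
{ rewrite E1, E2, <- surjective_pairing. exact Hc. }
pose proof (comp_deriv beta theta _ _ d1 d2 Hb R1 R2 Hc') as C.
cbv beta in C. revert C. destruct (Rle_dec 0 0) as [_|hn]; [|lra]. intro C. rewrite <- surjective_pairing in C.
eapply back; [exact C|].
intros s Hs. simpl. destruct (Rle_dec 0 s); [|lra].
rewrite <- surjective_pairing. reflexivity.
Qed.

Lemma sum_cpt theta p i : (i <= 2)%nat ->
  - (xk (cpt p i) 0 * cos (theta - ang 0) + xk (cpt p i) 1 * cos (theta - ang 1)
      + xk (cpt p i) 2 * cos (theta - ang 2)) = (3 * p - 1) * cos (theta - 2 * PI * INR i / 3).
Proof.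
intros Hi. pose proof (S0 theta) as HS.
destruct i as [|[|[|i]]]; [| | | exfalso; lia]; simpl xk;
 change (2 * PI * INR ?k / 3) with (ang k); nra.
Qed.

Theorem lemma5p1 (beta p q r_e theta eps : R) (i : nat)
  (m s : R -> R * R) :
  2 < beta ->
  0 < p < 1/2 -> 0 < q < 1/2 -> p < q ->
  f0 p = beta -> f0 q = beta ->
  (forall t, 0 < t < 1/2 -> f0 t = beta -> t = p \/ t = q) ->
  0 <= r_e -> 0 <= theta < 2 * PI ->
  0 < eps -> (i <= 2)%nat ->
  smooth_on (Ico0 eps) (fun r => fst (m r)) ->
  smooth_on (Ico0 eps) (fun r => snd (m r)) ->
  smooth_on (Ico0 eps) (fun r => fst (s r)) ->
  smooth_on (Ico0 eps) (fun r => snd (s r)) ->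
  m 0 = cpt p i -> s 0 = cpt q i ->
  (forall r, 0 <= r < eps -> critical beta theta (m r) r) ->
  (forall r, 0 <= r < eps -> critical beta theta (s r) r) ->
  is_deriv_within (Ico0 eps) (fun r => Fb beta theta (m r) r) 0
    ((3 * p - 1) * cos (theta - 2 * PI * INR i / 3)) /\
  is_deriv_within (Ico0 eps) (fun r => Fb beta theta (s r) r) 0
    ((3 * q - 1) * cos (theta - 2 * PI * INR i / 3)).
Proof.
intros Hb _ _ _ _ _ _ _ _ He Hi Sm1 Sm2 Ss1 Ss2 Hm0 Hs0 Cm Cs.
destruct (smooth_d _ _ Sm1 He) as [a1 A1].
destruct (smooth_d _ _ Sm2 He) as [a2 A2].
destruct (smooth_d _ _ Ss1 He) as [b1 B1].
destruct (smooth_d _ _ Ss2 He) as [b2 B2].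
assert (Hbn : beta <> 0) by lra.
split.
- rewrite <- (sum_cpt theta p i Hi), <- Hm0.
  apply (key _ _ _ _ _ _ He Hbn A1 A2). apply Cm; lra.
- rewrite <- (sum_cpt theta q i Hi), <- Hs0.
  apply (key _ _ _ _ _ _ He Hbn B1 B2). apply Cs; lra.
Qed.
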